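(* Let $\lambda_1,\ldots,\lambda_k$ be integers, let $n_1,\ldots,n_k$ be positive integers and let $a_1,\ldots,a_k$ be integers with $0\leqslant a_s<n_s$ for each $s$. Let $p$ be a prime with $p>|S(n_1,\ldots,n_k)|$ and let $\zeta_p$ be any primitive $p$th root of unity. Then $$\sum_{\substack{1\leqslant s\leqslant k\\ x\equiv a_s \pmod{n_s}}}\lambda_s=0\quad\text{for all }x\in\mathbb Z$$ if and only if $$\sum_{s=1}^k\lambda_s\frac{\zeta_p^{a_s}}{1-\zeta_p^{n_s}}=0.$$
   Context: For positive integers $n_1,\ldots,n_k$, $S(n_1,\ldots,n_k)=\{r/n_s: r=0,\ldots,n_s-1;\ s=1,\ldots,k\}$, a set of rational numbers, and $|S(\cdot)|$ denotes its cardinality. *)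

(* Defs.v *)
From mathcomp Require Import all_boot all_order all_algebra all_field.
Set Implicit Arguments. Unset Strict Implicit. Unset Printing Implicit Defensive.
Import Order.TTheory GRing.Theory Num.Theory.

(* S(n_1,...,n_k) = { r/n_s : 0 <= r < n_s, 1 <= s <= k } as a duplicate-free
   list of rationals; its cardinality is the size of this list. *)
Definition Sset (k : nat) (n : 'I_k -> nat) : seq rat :=
  undup (flatten [seq [seq ((r%:R : rat) / (n s)%:R)%R | r <- iota 0 (n s)] | s <- enum 'I_k]).

Definition card_S (k : nat) (n : 'I_k -> nat) : nat := size (Sset n).

(* Main.v *)
Require Import Defs.
From mathcomp Require Import all_boot all_order all_algebra all_field.
Import Order.TTheory GRing.Theory Num.Theory.
From mathcomp Require Import ring lra zify.
Set Implicit Arguments. Unset Strict Implicit.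
Local Open Scope ring_scope.

Lemma sum_mod_nat (R : comNzRingType) (z : R) n a m : (0 < n)%N -> (a < n)%N ->
  \sum_(x < m * n | (x %% n == a)%N) z ^+ x = z ^+ a * \sum_(j < m) (z ^+ n) ^+ j.
Proof.
move=> n0 an; elim: m => [|m IH]; first by rewrite mul0n !big_ord0 mulr0.
rewrite big_ord_recr /= mulrDr -IH -exprM -exprD.
rewrite -(big_mkord (fun x => (x %% n == a)%N)) mulSn addnC.
rewrite (@big_cat_nat _ _ _ (m * n)) ?leq_addr //= big_mkord; congr (_ + _).
rewrite -{1}(add0n (m*n)%N) big_addn addKn big_mkord.
rewrite (bigD1 (Ordinal an)) /=; last by rewrite addnC modnMDl modn_small.
rewrite big1 ?addr0; first by rewrite mulnC.
move=> i /andP [] ; rewrite addnC modnMDl modn_small // => /eqP ia ni.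
by case/eqP: ni; apply: val_inj.
Qed.

Lemma geom (R : comNzRingType) (z : R) n a m : (0 < n)%N -> (a < n)%N ->
  (1 - z ^+ n) * \sum_(x < m * n | (x %% n == a)%N) z ^+ x = z ^+ a * (1 - z ^+ (m * n)).
Proof.
move=> n0 an; rewrite sum_mod_nat // mulrCA; congr (_ * _).
rewrite mulnC exprM; have := subrX1 (z ^+ n) m.
by rewrite -[1 - _]opprB -[1 - (_ ^+ m)]opprB mulNr => ->.
Qed.
Local Open Scope ring_scope.

Definition Rf (k : nat) (lambda : 'I_k -> algC) (n a : 'I_k -> nat) (z : algC) :=
  \sum_(s < k) lambda s * z ^+ a s / (1 - z ^+ n s).

Lemma key (k : nat) (lambda : 'I_k -> algC) (n a : 'I_k -> nat) (N : nat) (w : algC)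
   (L : seq nat) (rs : seq algC) :
  (forall s, 0 < n s)%N -> (forall s, a s < n s)%N -> (forall s, n s %| N)%N ->
  N.-primitive_root w ->
  (forall s r, r < n s -> r * (N %/ n s) \in L)%N ->
  uniq rs -> (size L <= size rs)%N ->
  (forall z, z \in rs -> (forall s, z ^+ n s != 1) /\ Rf lambda n a z = 0) ->
  forall z, z ^+ N != 1 -> (forall s, z ^+ n s != 1) -> Rf lambda n a z = 0.
Proof.
move=> n0 an nN wN LS urs szL Hrs z zN zn.
pose D := \prod_(x <- [seq w ^+ e | e <- L]) ('X - x%:P).
have sD : size D = (size L).+1 by rewrite size_prod_XsubC size_map.
have dvs : forall s, ('X^(n s) - 1) %| D.
  move=> s; have ws := dvdn_prim_root wN (nN s).
  rewrite -(factor_Xn_sub_1 ws) /index_iota subn0 -(big_map (fun i => w ^+ (N %/ n s) ^+ i) xpredT (fun x => 'X - x%:P)).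
  apply: uniq_roots_dvdp.
    apply/allP => x /mapP [i]; rewrite mem_iota add0n => /andP [_ ir] ->.
    rewrite /D root_prod_XsubC -exprM mulnC; apply/mapP; exists (i * (N %/ n s))%N => //.
    exact: LS.
  rewrite uniq_rootsE map_inj_in_uniq ?iota_uniq // => i j.
  rewrite !mem_iota !add0n => /andP [_ ir] /andP [_ jr] /eqP.
  by rewrite (eq_prim_root_expr ws) !modn_small // => /eqP.
pose Q s := D %/ ('X^(n s) - 1).
have DQ : forall s, Q s * ('X^(n s) - 1) = D by move=> s; rewrite divpK.
pose T := \sum_(s < k) lambda s *: ('X^(a s) * Q s).
have Tz : forall z, (forall s, z ^+ n s != 1) -> T.[z] = - (D.[z] * Rf lambda n a z).
  move=> y yn; rewrite /Rf horner_sum mulr_sumr -sumrN; apply: eq_bigr => s _.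
  rewrite -(DQ s) hornerZ !hornerM hornerXn hornerD hornerN hornerXn hornerC.
  have h1 : 1 - y ^+ n s != 0 by rewrite subr_eq0 eq_sym.
  move: ((Q s).[y]) (lambda s) (y ^+ a s) (y ^+ n s) h1 => q l ya yn1 h1.
  field; exact: h1.
have szT : (size T <= size L)%N.
  apply: (big_ind (fun p : {poly algC} => size p <= size L)%N); first by rewrite size_poly0.
    by move=> p q hp hq; apply: leq_trans (size_polyD _ _) _; rewrite geq_max hp hq.
  move=> s _; apply: leq_trans (size_scale_leq _ _) _.
  have [->|Q0] := eqVneq (Q s) 0; first by rewrite mulr0 size_poly0.
  rewrite mulrC size_mulXn //.
  have : size D = (size (Q s) + (n s).+1).-1.
    rewrite -{1}(DQ s) size_mul // ?size_XnsubC //.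
    by rewrite -size_poly_eq0 size_XnsubC.
  rewrite sD => hL.
  by move: hL (an s); move: (size L) (size (Q s)) (a s) (n s) => A B C E; lia.
have T0 : T = 0.
  apply/eqP; apply/negPn/negP => T0.
  have hr : all (root T) rs.
    apply/allP => x xr; have [xn Rx] := Hrs x xr.
    by rewrite /root Tz // Rx mulr0 oppr0.
  have := max_poly_roots T0 hr urs.
  by move: szT szL; move: (size T) (size L) (size rs) => A B C; lia.
have := Tz z zn; rewrite T0 horner0 => /esym /eqP; rewrite oppr_eq0 mulf_eq0.
case/orP => [h|/eqP //].
have : root D z := h.
rewrite root_prod_XsubC => /mapP [e _ ze]; case/negP: zN.
by rewrite ze -exprM mulnC exprM (prim_expr_order wN) expr1n.
Qed.

Lemma cond (x : int) (N n a y : nat) : (0 < n)%N -> (a < n)%N -> (n %| N)%N ->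
  (x %% N%:Z)%Z = y%:Z -> (x == a%:Z %[mod n%:Z])%Z = ((y %% n)%N == a).
Proof.
move=> n0 an nN hy; rewrite eqz_mod_dvd.
have -> : x - a%:Z = (x %/ N%:Z)%Z * N%:Z + (y%:Z - a%:Z).
  by rewrite {1}(divz_eq x N) hy addrA.
rewrite rpredDl; last by apply: dvdz_mull; rewrite dvdzE /=.
by rewrite -eqz_mod_dvd !modz_nat (modn_small an).
Qed.

Lemma ident (k : nat) (lam : 'I_k -> algC) (n a : 'I_k -> nat) (N : nat) (y : algC) :
  (forall s, 0 < n s)%N -> (forall s, a s < n s)%N -> (forall s, n s %| N)%N ->
  (forall s, y ^+ n s != 1) ->
  \sum_(x < N) (\sum_(s < k | (x %% n s == a s)%N) lam s) * y ^+ x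
    = (1 - y ^+ N) * Rf lam n a y.
Proof.
move=> n0 an nN yn; rewrite /Rf mulr_sumr.
transitivity (\sum_(s < k) lam s * \sum_(x < N | (x %% n s == a s)%N) y ^+ x).
  rewrite (eq_bigr (fun x : 'I_N => \sum_(s < k) (if (x %% n s == a s)%N then lam s * y ^+ x else 0))); last first.
    by move=> x _; rewrite mulr_suml big_mkcond; apply: eq_bigr => s _; case: ifP => //; rewrite mul0r.
  rewrite exchange_big; apply: eq_bigr => s _; rewrite mulr_sumr [RHS]big_mkcond /=.
  by apply: eq_bigr => x _; case: ifP => //; rewrite mulr0.
apply: eq_bigr => s _.
have G := geom y (N %/ n s) (n0 s) (an s); rewrite divnK // in G.
have h : 1 - y ^+ n s != 0 by rewrite subr_eq0 eq_sym.
rewrite -[X in lam s * X](mulKf h) G.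
move: (lam s) (y ^+ a s) (y ^+ N) (y ^+ n s) h => l ya yN yn1 h.
field; exact: h.
Qed.

Lemma galois_int (P0 : {poly int}) (p : nat) (zeta x : algC) :
  p.-primitive_root zeta -> p.-primitive_root x ->
  root (map_poly intr P0) zeta -> root (map_poly intr P0) x.
Proof.
move=> pz px.
have [pf [Dpf _] dv] := minCpolyP zeta.
have Eq : map_poly intr P0 = map_poly ratr (map_poly intr P0 : {poly rat}) :> {poly algC}.
  by rewrite -map_poly_comp; apply: eq_map_poly => b /=; rewrite rmorph_int.
rewrite Eq dv => hd; apply: (@root_dvdp _ (minCpoly zeta)).
  by rewrite Dpf dvdp_map.
by rewrite (minCpoly_cyclotomic pz) root_cyclotomic.
Qed.

Lemma nS_le (k : nat) (n : 'I_k -> nat) s : (0 < n s)%N -> (n s <= card_S n)%N.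
Proof.
move=> n0; rewrite /card_S /Sset.
pose l := [seq (r%:R : rat) / (n s)%:R | r <- iota 0 (n s)].
have -> : n s = size l by rewrite size_map size_iota.
apply: uniq_leq_size.
  rewrite map_inj_in_uniq ?iota_uniq // => i j _ _ /eqP.
  have nz : (n s)%:R != 0 :> rat by rewrite pnatr_eq0 -lt0n.
  by rewrite (can_eq (divfK nz)) eqr_nat => /eqP.
move=> x xl; rewrite mem_undup; apply/flatten_mapP; exists s => //.
by rewrite mem_enum.
Qed.

Theorem theorem1p2 (k : nat) (lambda : 'I_k -> int) (n : 'I_k -> nat)
    (a : 'I_k -> nat) (p : nat) (zeta : algC) :
  (forall s, 0 < n s)%N ->
  (forall s, a s < n s)%N ->
  prime p -> (card_S n < p)%N ->
  (p.-primitive_root zeta)%R ->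
  (forall x : int,
      (\sum_(s < k | (x == (a s)%:Z %[mod (n s)%:Z])%Z) (lambda s : int))%R = 0%R)
  <->
  (\sum_(s < k) (lambda s)%:~R * zeta ^+ a s / (1 - zeta ^+ n s) = 0 :> algC)%R.
Proof.
move=> n0 an pp cS pz.
have nlt : forall s, (n s < p)%N by move=> s; exact: leq_ltn_trans (nS_le (n0 s)) cS.
pose N := (\prod_(s < k) n s)%N.
have N0 : (0 < N)%N by apply: prodn_gt0.
have nN : forall s, (n s %| N)%N by move=> s; rewrite /N (bigD1 s) //= dvdn_mulr.
have pN : ~~ (p %| N)%N.
  apply: (big_ind (fun m => ~~ (p %| m)%N)).
  - by rewrite dvdn1; apply/negP => /eqP e; move: (prime_gt1 pp); rewrite e.
  - by move=> x y hx hy; rewrite Euclid_dvdM // negb_or hx hy.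
  - by move=> s _; rewrite gtnNdvd.
have prim_ok : forall z : algC, p.-primitive_root z -> z ^+ N != 1 /\ forall s, z ^+ n s != 1.
  move=> z pzz; split; first by rewrite -(prim_order_dvd pzz).
  by move=> s; rewrite -(prim_order_dvd pzz) gtnNdvd.
pose lam s := ((lambda s)%:~R : algC).
pose F x := (\sum_(s < k | (x %% n s == a s)%N) lambda s)%R.
pose P := \poly_(x < N) ((F x)%:~R : algC).
have P_eval : forall y, (forall s, y ^+ n s != 1) -> P.[y] = (1 - y ^+ N) * Rf lam n a y.
  move=> y yn; rewrite horner_poly -ident //; apply: eq_bigr => x _.
  by rewrite /F rmorph_sum.
change ((forall x : int,
      (\sum_(s < k | (x == (a s)%:Z %[mod (n s)%:Z])%Z) (lambda s : int))%R = 0%R)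
  <-> Rf lam n a zeta = 0).
split.
  move=> H.
  have FP : forall y, (y < N)%N -> F y = 0.
    move=> y yN; rewrite -(H y%:Z); apply: eq_bigl => s.
    have hy : (y%:Z %% N%:Z)%Z = y%:Z by rewrite modz_nat modn_small.
    by rewrite (cond (n0 s) (an s) (nN s) hy).
  have P0 : P = 0.
    by apply/polyP => i; rewrite coef_poly coef0; case: ifP => // iN; rewrite FP.
  have [zN zn] := prim_ok zeta pz.
  have := P_eval zeta zn; rewrite P0 horner0 => /esym/eqP.
  by rewrite mulf_eq0 subr_eq0 eq_sym (negbTE zN) /= => /eqP.
move=> HR.
have [w wN] := C_prim_root_exists N0.
pose L := [seq `|numq (q * N%:R)|%N | q <- Sset n].
pose rs := [seq zeta ^+ j | j <- iota 1 p.-1].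
have LS : forall s r, (r < n s)%N -> (r * (N %/ n s))%N \in L.
  move=> s r rn; apply/mapP; exists ((r%:R : rat) / (n s)%:R).
    rewrite mem_undup; apply/flatten_mapP; exists s; first by rewrite mem_enum.
    by apply: map_f; rewrite mem_iota.
  have nz : (n s)%:R != 0 :> rat by rewrite pnatr_eq0 -lt0n.
  have -> : ((r%:R : rat) / (n s)%:R * N%:R) = (r * (N %/ n s))%N%:R.
    by rewrite -{1}(divnK (nN s)) !natrM mulrCA divfK // mulrC.
  by rewrite (numq_int (r * (N %/ n s))%N).
have urs : uniq rs.
  rewrite map_inj_in_uniq ?iota_uniq // => i j.
  have e1 : (1 + p.-1)%N = p by rewrite add1n prednK // prime_gt0.
  rewrite !mem_iota e1 => /andP [i1 ip] /andP [j1 jp] /eqP.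
  rewrite (eq_prim_root_expr pz) !modn_small => [/eqP //| |]; lia.
have szL : (size L <= size rs)%N.
  by rewrite !size_map size_iota -ltnS prednK ?prime_gt0.
pose P0 := \poly_(x < N) F x.
have PP0 : P = map_poly intr P0.
  by apply/polyP => i; rewrite coef_map !coef_poly; case: ifP.
have rootz : root P zeta by rewrite /root P_eval ?HR ?mulr0 //; case: (prim_ok _ pz).
have Hrs : forall z, z \in rs -> (forall s, z ^+ n s != 1) /\ Rf lam n a z = 0.
  have e1 : (1 + p.-1)%N = p by rewrite add1n prednK // prime_gt0.
  move=> z /mapP [j]; rewrite mem_iota e1 => /andP [j1 jp] ->.
  have pj : p.-primitive_root (zeta ^+ j).
    rewrite (prim_root_exp_coprime _ pz) coprime_sym prime_coprime // gtnNdvd //.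
  have [zN zn] := prim_ok _ pj; split => //.
  have : root P (zeta ^+ j) by rewrite PP0; apply: (galois_int pz pj); rewrite -PP0.
  rewrite /root P_eval // mulf_eq0 subr_eq0 eq_sym (negbTE zN) /=; exact/eqP.
have K := key n0 an nN wN LS urs szL Hrs.
have P0z : P = 0.
  apply/eqP; apply/negPn/negP => Pn0.
  pose ys := [seq (i.+2)%:R : algC | i <- iota 0 N].
  have uys : uniq ys by rewrite map_inj_in_uniq ?iota_uniq // => i j _ _ /eqP; rewrite eqr_nat => /eqP [].
  have ne1 : forall i t, (0 < t)%N -> ((i.+2)%:R : algC) ^+ t != 1.
    move=> i t t0; rewrite -natrX pnatr_eq1; have := @ltn_expl i.+2 t isT.
    by move: (i.+2 ^ t)%N => m; lia.
  have ar : all (root P) ys.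
    apply/allP => y /mapP [i _ ->]; rewrite /root P_eval; last by move=> s; apply: ne1.
    rewrite K ?mulr0 //; last by move=> s; apply: ne1.
    by apply: ne1.
  have := max_poly_roots Pn0 ar uys; rewrite size_map size_iota.
  have := size_poly N (fun x => ((F x)%:~R : algC)); rewrite -/P => h1 h2.
  by have := leq_ltn_trans h1 h2; rewrite ltnn.
move=> x.
have xge : (0 <= (x %% N%:Z)%Z) by apply: modz_ge0; rewrite eqz_nat -lt0n.
have hy : (x %% N%:Z)%Z = (`|(x %% N%:Z)%Z|%N)%:Z by rewrite gez0_abs.
have yN : (`|(x %% N%:Z)%Z|%N < N)%N.
  by rewrite -ltz_nat -hy ltz_pmod // ltz_nat.
rewrite (eq_bigl (fun s => (`|(x %% N%:Z)%Z|%N %% n s == a s)%N)); last first.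
  by move=> s; rewrite (cond (n0 s) (an s) (nN s) hy).
apply/eqP; rewrite -(intr_eq0 algC) -/(F _).
have := congr1 (fun q : {poly algC} => q`_(`|(x %% N%:Z)%Z|%N)) P0z.
by rewrite /= coef_poly yN coef0 => ->.
Qed.
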